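(* Let $P=\{p_1,\dots,p_n\}$ be weighted points in $\mathbb{R}^d$ with total weight $1$, let $S=\{s_1,\dots,s_m\}$ be $d$-dimensional simplices in $\mathbb{R}^d$ of total volume $1$ with longest edge length $\Delta$, and let $0<\delta\le\frac15$. Let $\tau$ be the transport plan produced by the construction in the context and $\tau^*$ an optimal transport plan between $P$ and $S$. Then $\|\tau\|\le(1+21\delta)\|\tau^*\|$.
   Context: Each simplex's mass equals its volume and is spread uniformly with a common density. A transport plan moves from each point its weight and delivers to the simplices exactly their mass distribution; its cost $\|\tau\|$ is the integral of moved mass times Euclidean distance; $\|\tau^*\|$ is the minimum cost. Construction: (1) Overlay a uniform grid of cubes of side $\Delta$ and keep the cells intersected by some simplex. (2) Repeatedly subdivide each cell into $2^d$ equal subcubes until, for every point of $P$, the ratio of the distances to the furthest and closest point of the cell is at most $1+\delta$, or until the cell lies wholly within Euclidean distance $\delta/(nm)^{1/d}$ of some point of $P$. Let $Q$ be the resulting cells. (3) In each $q\in Q$ pick an arbitrary point with weight equal to the total volume of simplices contained in $q$; call this set $T$. (4) Compute an optimal transport plan $\nu$ between $P$ and $T$. (5) Obtain $\tau$ by spreading the mass sent by $\nu$ to each $t\in T$ uniformly over the parts of simplices contained in the cell from which $t$ was chosen. *)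

(* Defs.v *)
From HB Require Import structures.
From mathcomp Require Import all_boot all_order all_algebra.
From mathcomp Require Import all_classical all_reals all_analysis.
Set Implicit Arguments. Unset Strict Implicit. Unset Printing Implicit Defensive.
Import Order.TTheory GRing.Theory Num.Theory.
Local Open Scope classical_set_scope.
Local Open Scope ring_scope.

Section Defs.
Variables (R : realType) (d : nat).

Definition Rd := d.-tuple R.

Definition edist (x y : Rd) : R :=
  Num.sqrt (\sum_(i < d) (tnth x i - tnth y i) ^+ 2).

Definition closed_box (a b : Rd) : set Rd :=
  [set x | forall i, tnth a i <= tnth x i <= tnth b i].

Definition simplex_hull (v : 'I_d.+1 -> Rd) : set Rd :=
  [set x | exists lam : 'I_d.+1 -> R,
     (forall k, 0 <= lam k) /\ \sum_k lam k = 1 /\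
     forall i, tnth x i = \sum_k lam k * tnth (v k) i].

Definition full_dim_simplex (v : 'I_d.+1 -> Rd) : Prop :=
  \det (\matrix_(k < d, i < d) (tnth (v (lift ord0 k)) i - tnth (v ord0) i))
    != 0.

Definition longest_edge m (S : 'I_m -> 'I_d.+1 -> Rd) : R :=
  \big[Num.max/0]_(j < m) \big[Num.max/0]_(k < d.+1)
     \big[Num.max/0]_(k' < d.+1) edist (S j k) (S j k').

(* Cells of the (dyadically refined) grid of side Delta with origin o:
   the index (l, z) denotes the closed cube of side Delta / 2^l with lower
   corner o + (Delta / 2^l) z. Level 0 cells are the cells of the initial
   uniform grid; level l cells are those obtained after l subdivisions. *)
Definition cellidx := (nat * d.-tuple int)%type.

Definition grid_cell (o : Rd) (Delta : R) (c : cellidx) : set Rd :=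
  [set x | forall i,
     tnth o i + Delta / 2 ^+ c.1 * (tnth c.2 i)%:~R <= tnth x i <=
     tnth o i + Delta / 2 ^+ c.1 * ((tnth c.2 i)%:~R + 1)].

Definition stop_crit n (P : 'I_n -> Rd) (delta rad : R) (X : set Rd) :=
  (forall i x y, X x -> X y -> edist (P i) x <= (1 + delta) * edist (P i) y)
  \/ (exists i, forall x, X x -> edist x (P i) <= rad).

(* Membership in the final set of cells Q produced by steps (1)-(2):
   c is a dyadic grid_cell whose level-0 ancestor meets some simplex_hull, which
   satisfies the stopping criterion while none of its ancestors does. *)
Definition in_Q n m (P : 'I_n -> Rd) (S : 'I_m -> 'I_d.+1 -> Rd)
  (o : Rd) (Delta delta rad : R) (c : cellidx) : Prop :=
  (exists z0 : d.-tuple int,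
     grid_cell o Delta c `<=` grid_cell o Delta (0%N, z0) /\
     exists j, grid_cell o Delta (0%N, z0) `&` simplex_hull (S j) !=set0)
  /\ stop_crit P delta rad (grid_cell o Delta c)
  /\ (forall (l' : nat) (z' : d.-tuple int), (l' < c.1)%N ->
        grid_cell o Delta c `<=` grid_cell o Delta (l', z') ->
        ~ stop_crit P delta rad (grid_cell o Delta (l', z'))).

(* Lebesgue measure on R^d (characterised by its values on boxes; this
   determines it on the (Borel) sigma-algebra of d.-tuple R). *)
Definition is_lebesgue (lam : {measure set Rd -> \bar R}) : Prop :=
  forall a b : Rd, (forall i, tnth a i <= tnth b i) ->
    lam (closed_box a b) = (\prod_(i < d) (tnth b i - tnth a i))%:E.

(* A transport plan from the weighted points (P, w) to the simplices S,
   each simplex_hull carrying mass equal to its volume, spread uniformly: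
   mu i is the mass distribution sent from P i. *)
Definition transport_plan n m (lam : {measure set Rd -> \bar R})
  (P : 'I_n -> Rd) (w : 'I_n -> R) (S : 'I_m -> 'I_d.+1 -> Rd)
  (mu : 'I_n -> {measure set Rd -> \bar R}) : Prop :=
  (forall i, mu i setT = (w i)%:E) /\
  (forall A, measurable A ->
     (\sum_(i < n) mu i A = \sum_(j < m) lam (A `&` simplex_hull (S j)))%E).

Definition plan_cost n (P : 'I_n -> Rd)
  (mu : 'I_n -> {measure set Rd -> \bar R}) : \bar R :=
  (\sum_(i < n) \int[mu i]_x (edist x (P i))%:E)%E.

Definition discrete_plan n (w : 'I_n -> R) (Q : seq cellidx)
  (W : cellidx -> R) (nu : 'I_n -> cellidx -> R) : Prop :=
  (forall i q, 0 <= nu i q) /\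
  (forall i, \sum_(q <- Q) nu i q = w i) /\
  (forall q, q \in Q -> \sum_(i < n) nu i q = W q).

Definition discrete_cost n (P : 'I_n -> Rd) (Q : seq cellidx)
  (t : cellidx -> Rd) (nu : 'I_n -> cellidx -> R) : R :=
  \sum_(i < n) \sum_(q <- Q) nu i q * edist (P i) (t q).

End Defs.

(* Main.v *)
Require Import Defs.
From HB Require Import structures.
From mathcomp Require Import all_boot all_order all_algebra.
From mathcomp Require Import all_classical all_reals all_analysis.
From mathcomp Require Import ring lra.
From mathcomp Require Import measurable_realfun.
From mathcomp Require Import zify.
Import Order.TTheory GRing.Theory Num.Theory.
Set Implicit Arguments. Unset Strict Implicit. Unset Printing Implicit Defensive.
Local Open Scope classical_set_scope.
Local Open Scope ring_scope.
Local Notation edist := Defs.edist.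
Section Dist.
Variables (R : realType) (d : nat).
Implicit Types x y z : Rd R d.

Lemma edist_ge0 x y : 0 <= edist x y.
Proof. exact: sqrtr_ge0. Qed.

Lemma edistC x y : edist x y = edist y x.
Proof.
rewrite /edist; congr Num.sqrt; apply: eq_bigr => i _.
by rewrite -sqrrN opprB.
Qed.

Lemma edist_coord x y i : `|tnth x i - tnth y i| <= edist x y.
Proof.
rewrite /edist -sqrtr_sqr ler_sqrt; last by rewrite sumr_ge0 // => j _; rewrite sqr_ge0.
rewrite (bigD1 i) //= lerDl sumr_ge0 // => j _; exact: sqr_ge0.
Qed.

Lemma CS (a b : 'I_d -> R) :
  \sum_i a i * b i <= Num.sqrt (\sum_i a i ^+ 2) * Num.sqrt (\sum_i b i ^+ 2).
Proof.
set A := \sum_i a i ^+ 2; set B := \sum_i b i ^+ 2.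
have A0 : 0 <= A by rewrite sumr_ge0 // => i _; rewrite sqr_ge0.
have B0 : 0 <= B by rewrite sumr_ge0 // => i _; rewrite sqr_ge0.
set sA := Num.sqrt A; set sB := Num.sqrt B.
have sA2 : sA ^+ 2 = A by rewrite sqr_sqrtr.
have sB2 : sB ^+ 2 = B by rewrite sqr_sqrtr.
have sA0 : 0 <= sA by exact: sqrtr_ge0.
have sB0 : 0 <= sB by exact: sqrtr_ge0.
have key : 2 * (sA * sB) * \sum_i a i * b i <= 2 * (sA * sB) ^+ 2.
  have : \sum_i (2 * (sA * sB) * (a i * b i)) <= \sum_i (a i ^+ 2 * B + b i ^+ 2 * A).
    apply: ler_sum => i _.
    have h := sqr_ge0 (a i * sB - b i * sA).
    rewrite -sA2 -sB2; nra.
  rewrite -mulr_sumr big_split /= -!mulr_suml -/A -/B.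
  by rewrite -sA2 -sB2; nra.
have [p0|] := eqVneq (sA * sB) 0.
  rewrite p0; move/eqP: p0; rewrite mulf_eq0 => /orP [] /eqP h.
  - have : A = 0 by rewrite -sA2 h expr0n.
    move/eqP; rewrite psumr_eq0; last by move=> i _; rewrite sqr_ge0.
    move/allP => h2; rewrite big1 // => i _.
    by move: (h2 i (mem_index_enum i)); rewrite /= sqrf_eq0 => /eqP ->; rewrite mul0r.
  - have : B = 0 by rewrite -sB2 h expr0n.
    move/eqP; rewrite psumr_eq0; last by move=> i _; rewrite sqr_ge0.
    move/allP => h2; rewrite big1 // => i _.
    by move: (h2 i (mem_index_enum i)); rewrite /= sqrf_eq0 => /eqP ->; rewrite mulr0.
move=> pn0.
have pp : 0 < sA * sB by rewrite lt0r pn0 mulr_ge0.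
nra.
Qed.

Lemma edist_triangle x y z : edist x z <= edist x y + edist y z.
Proof.
rewrite /edist.
set a := fun i => tnth x i - tnth y i.
set b := fun i => tnth y i - tnth z i.
have -> : \sum_(i < d) (tnth x i - tnth z i) ^+ 2 =
  \sum_i a i ^+ 2 + 2 * \sum_i a i * b i + \sum_i b i ^+ 2.
  rewrite mulr_sumr -!big_split /=; apply: eq_bigr => i _.
  rewrite /a /b; ring.
have h := CS a b.
have A0 : 0 <= \sum_i a i ^+ 2 by rewrite sumr_ge0 // => i _; rewrite sqr_ge0.
have B0 : 0 <= \sum_i b i ^+ 2 by rewrite sumr_ge0 // => i _; rewrite sqr_ge0.
have sA0 := sqrtr_ge0 (\sum_i a i ^+ 2).
have sB0 := sqrtr_ge0 (\sum_i b i ^+ 2).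
rewrite -[X in _ <= X]ger0_norm ?addr_ge0 // -sqrtr_sqr ler_sqrt ?sqr_ge0 //.
rewrite sqrrD !sqr_sqrtr //; nra.
Qed.

Lemma edist_box x y (h : R) : 0 <= h ->
  (forall i, `|tnth x i - tnth y i| <= h) -> edist x y <= d%:R * h.
Proof.
move=> h0 H.
have dh0 : 0 <= d%:R * h by rewrite mulr_ge0.
rewrite /edist -(ger0_norm dh0) -sqrtr_sqr ler_sqrt ?sqr_ge0 //.
apply: (@le_trans _ _ (\sum_(i < d) h ^+ 2)).
  apply: ler_sum => i _; rewrite -real_normK ?num_real //.
  by rewrite lerXn2r ?nnegrE // ?normr_ge0 //.
rewrite sumr_const card_ord exprMn -mulr_natl mulr1.
have hh : 0 <= h ^+ 2 by rewrite sqr_ge0.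
have : d%:R <= d%:R ^+ 2 :> R.
  case: d => [|k]; first by rewrite expr0n.
  by rewrite -natrX ler_nat expnS; apply: leq_pmulr.
nra.
Qed.
End Dist.

Section Meas.
Variables (R : realType) (d : nat).
Local Notation Rd := (Rd R d).

Lemma mtnth (i : 'I_d) : measurable_fun [set: Rd] (fun x : Rd => tnth x i).
Proof. exact: measurable_tnth. Qed.

Lemma measurable_ge0 (g : Rd -> R) : measurable_fun setT g ->
  measurable [set x | 0 <= g x].
Proof.
move=> mg.
have := mg measurableT _ (measurable_itv `[0, +oo[).
rewrite setTI; congr measurable; apply/seteqP; split => x /=;
  by rewrite in_itv /= andbT.
Qed.

Lemma measurable_boxf (a b : 'I_d -> R) :
  measurable [set x : Rd | forall i, a i <= tnth x i <= b i].
Proof.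
have -> : [set x : Rd | forall i, a i <= tnth x i <= b i] =
   \bigcap_(i in [set: 'I_d]) ((fun x : Rd => tnth x i) @^-1` [set` `[a i, b i]]).
  apply/seteqP; split => x /=.
    by move=> H i _ /=; rewrite in_itv /=; exact: H.
  by move=> H i; have := H i I; rewrite /= in_itv.
apply: fin_bigcap_measurable; first exact: finite_finset.
move=> i _.
have := mtnth i measurableT (measurable_itv `[a i, b i]).
by rewrite setTI.
Qed.

Lemma measurable_closed_box (a b : Rd) : measurable (closed_box a b).
Proof. exact: (measurable_boxf (tnth a) (tnth b)). Qed.

Lemma measurable_grid_cell (o : Rd) (D : R) (c : cellidx d) : measurable (grid_cell o D c).
Proof.
exact: (measurable_boxf (fun i => tnth o i + D / 2 ^+ c.1 * (tnth c.2 i)%:~R)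
                        (fun i => tnth o i + D / 2 ^+ c.1 * ((tnth c.2 i)%:~R + 1))).
Qed.

Lemma measurable_edist (p : Rd) : measurable_fun setT (fun x : Rd => edist x p).
Proof.
rewrite /edist.
apply: (@measurableT_comp _ _ _ _ _ _ (@Num.sqrt R)).
  exact: (measurable_realfun.continuous_measurable_fun (@sqrt_continuous R)).
apply: measurable_sum => i.
apply: measurable_realfun.measurable_funX.
apply: measurable_realfun.measurable_funB; first exact: mtnth.
exact: measurable_cst.
Qed.

Lemma measurable_edistE (p : Rd) : measurable_fun [set: Rd] (fun x : Rd => ((edist x p)%:E : \bar R)).
Proof. by apply/measurable_realfun.measurable_EFinP; exact: measurable_edist. Qed.

End Meas.

Section Simplex.
Variables (R : realType) (d : nat).
Local Notation Rd := (Rd R d).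
Variable v : 'I_d.+1 -> Rd.
Hypothesis fd : full_dim_simplex v.

Let M : 'M[R]_d := \matrix_(k < d, i < d) (tnth (v (lift ord0 k)) i - tnth (v ord0) i).
Let rx (x : Rd) : 'rV[R]_d := \row_i (tnth x i - tnth (v ord0) i).
Let mu (x : Rd) : 'rV[R]_d := rx x *m invmx M.

Let ME k i : M k i = tnth (v (lift ord0 k)) i - tnth (v ord0) i.
Proof. by rewrite mxE. Qed.

Let Munit : M \in unitmx.
Proof. by rewrite unitmxE unitfE. Qed.

Lemma simplex_hullE : simplex_hull v =
  [set x | (forall k, 0 <= mu x 0 k) /\ \sum_k mu x 0 k <= 1].
Proof.
apply/seteqP; split => x /=.
  move=> [lam [l0 [l1 lx]]].
  pose m : 'rV[R]_d := \row_k lam (lift ord0 k).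
  have rxE : rx x = m *m M.
    apply/rowP => i; rewrite !mxE lx big_ord_recl.
    have -> : lam ord0 = 1 - \sum_(k < d) lam (lift ord0 k).
      by rewrite -l1 big_ord_recl addrK.
    have -> : \sum_j m 0 j * M j i = \sum_(k < d) lam (lift ord0 k) * tnth (v (lift ord0 k)) i
       - (\sum_(k < d) lam (lift ord0 k)) * tnth (v ord0) i.
      rewrite mulr_suml -sumrB; apply: eq_bigr => k _; rewrite !mxE; ring.
    ring.
  have muE : mu x = m by rewrite /mu rxE mulmxK.
  rewrite muE; split => [k|]; first by rewrite mxE.
  have : \sum_(k < d) m 0 k = 1 - lam ord0.
    by rewrite -l1 big_ord_recl addrAC subrr add0r; apply: eq_bigr => k _; rewrite mxE.
  by move=> ->; rewrite lerBlDr lerDl.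
move=> [m0 m1].
pose lam (k : 'I_d.+1) : R :=
  if unlift ord0 k is Some k' then mu x 0 k' else 1 - \sum_k mu x 0 k.
have lam0 : lam ord0 = 1 - \sum_k mu x 0 k by rewrite /lam unlift_none.
have lamS k : lam (lift ord0 k) = mu x 0 k by rewrite /lam liftK.
exists lam; split; [|split].
- move=> k; rewrite /lam; case: unliftP => [k' _|_] //; by rewrite subr_ge0.
- by rewrite big_ord_recl lam0 (eq_bigr _ (fun k _ => lamS k)) subrK.
- move=> i.
  have hm : mu x *m M = rx x by rewrite /mu mulmxKV.
  have := congr1 (fun A : 'rV[R]_d => A 0 i) hm; rewrite !mxE => hi.
  rewrite big_ord_recl lam0 (eq_bigr _ (fun k _ => congr1 (fun t => t * tnth (v (lift ord0 k)) i) (lamS k))).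
  have : tnth x i = tnth (v ord0) i + \sum_j mu x 0 j * M j i by rewrite hi; ring.
  move=> ->.
  rewrite mulrBl mul1r mulr_suml -addrA; congr (_ + _).
  rewrite addrC -sumrB; apply: eq_bigr => k _; rewrite ME; ring.
Qed.

Lemma measurable_simplex : measurable (simplex_hull v).
Proof.
rewrite simplex_hullE.
have mk k : measurable_fun [set: Rd] (fun x => mu x 0 k).
  have -> : (fun x => mu x 0 k) = (fun x => \sum_(i < d) (tnth x i - tnth (v ord0) i) * invmx M i k).
    by apply: funext => x; rewrite /mu /rx !mxE; apply: eq_bigr => i _; rewrite mxE.
  apply: measurable_sum => i.
  apply: measurable_funM; last exact: measurable_cst.
  apply: measurable_funB; first exact: mtnth.
  exact: measurable_cst.
have -> : [set x | (forall k, 0 <= mu x 0 k) /\ \sum_k mu x 0 k <= 1] =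
  (\bigcap_(k in [set: 'I_d]) [set x | 0 <= mu x 0 k]) `&` [set x | 0 <= 1 - \sum_k mu x 0 k].
  apply/seteqP; split => x /=.
    by move=> [h1 h2]; split; [move=> k _; exact: h1 | rewrite subr_ge0].
  by move=> [h1 h2]; split; [move=> k; exact: h1 | rewrite -subr_ge0].
apply: measurableI.
  apply: fin_bigcap_measurable; first exact: finite_finset.
  by move=> k _; apply: measurable_ge0; exact: mk.
apply: measurable_ge0; apply: measurable_funB; first exact: measurable_cst.
exact: measurable_sum.
Qed.
End Simplex.

Section Grid.
Variables (R : realType) (d : nat) (o : Rd R d) (D : R).
Hypothesis D0 : 0 < D.
Local Notation Rd := (Rd R d).

Definition hh (l : nat) : R := D / 2 ^+ l.
Lemma hh_gt0 l : 0 < hh l.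
Proof. by rewrite /hh divr_gt0 // exprn_gt0. Qed.

Lemma hhS l k : hh l = hh (l + k)%N * 2 ^+ k.
Proof.
rewrite /hh exprD invfM mulrA -[RHS]mulrA mulVf ?mulr1 //.

Qed.

Lemma cellE l (z : d.-tuple int) x : grid_cell o D (l, z) x <->
  forall i, hh l * (tnth z i)%:~R <= tnth x i - tnth o i <= hh l * ((tnth z i)%:~R + 1).
Proof.
rewrite /grid_cell /=; split => H i; have := H i; rewrite /hh => /andP [h1 h2];
  apply/andP; split; lra.
Qed.

Lemma intr2X k : ((2 ^+ k : int)%:~R : R) = 2 ^+ k.
Proof. by rewrite rmorphXn /=. Qed.

Lemma hh_int l k (a : int) : hh l * a%:~R = hh (l + k)%N * (a * 2 ^+ k)%:~R.
Proof. rewrite intrM intr2X (hhS l k). ring. Qed.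

Lemma hh_le l (a b : int) : (hh l * a%:~R <= hh l * b%:~R) = (a <= b).
Proof. by rewrite ler_pM2l ?hh_gt0 // ler_int. Qed.

Lemma cell_nest l k (z z' : d.-tuple int) :
  (forall i, tnth z i * 2 ^+ k <= tnth z' i /\ tnth z' i + 1 <= (tnth z i + 1) * 2 ^+ k) ->
  grid_cell o D ((l + k)%N, z') `<=` grid_cell o D (l, z).
Proof.
move=> H x /cellE Hx; apply/cellE => i.
have [h1 h2] := H i; have /andP [x1 x2] := Hx i.
have e1 : hh l * (tnth z i)%:~R <= hh (l + k)%N * (tnth z' i)%:~R.
  by rewrite (hh_int l k) hh_le.
have e2 : hh (l + k)%N * ((tnth z' i)%:~R + 1) <= hh l * ((tnth z i)%:~R + 1).
  have -> : (tnth z' i)%:~R + 1 = (tnth z' i + 1)%:~R :> R by rewrite intrD.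
  have -> : (tnth z i)%:~R + 1 = (tnth z i + 1)%:~R :> R by rewrite intrD.
  by rewrite (hh_int l k (tnth z i + 1)) hh_le.
apply/andP; split; lra.
Qed.

Lemma coord_dich (a b t : int) : 0 < t ->
  (a * t <= b /\ b + 1 <= (a + 1) * t) \/ (b + 1 <= a * t \/ (a + 1) * t <= b).
Proof.
move=> t0; rewrite mulrDl mul1r.
set A := a * t; lia.
Qed.

(* two dyadic cells either nest or meet in a degenerate box *)
Lemma cell_overlap l k (z z' : d.-tuple int) :
  (exists i, tnth z' i + 1 <= tnth z i * 2 ^+ k \/ (tnth z i + 1) * 2 ^+ k <= tnth z' i) ->
  exists a b : Rd, (forall j, tnth a j <= tnth b j) /\ (exists i, tnth a i = tnth b i) /\
    grid_cell o D (l, z) `&` grid_cell o D ((l + k)%N, z') `<=` closed_box a b.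
Proof.
move=> [i Hi].
pose lo j := tnth o j + hh l * (tnth z j)%:~R.
pose up j := tnth o j + hh l * ((tnth z j)%:~R + 1).
have loup j : lo j <= up j by rewrite /lo /up lerD2l ler_pM2l ?hh_gt0 // lerDl.
case: Hi => Hi.
- pose v := lo i.
  exists [tuple if j == i then v else lo j | j < d].
  exists [tuple if j == i then v else up j | j < d].
  split; [move=> j; rewrite !tnth_mktuple; case: eqP => //|split].
    by exists i; rewrite !tnth_mktuple eqxx.
  move=> x [/cellE H1 /cellE H2] j; rewrite !tnth_mktuple.
  have /andP [a1 a2] := H1 j.
  case: eqP => [->|_]; last by rewrite /lo /up; apply/andP; split; lra.
  have /andP [b1 b2] := H2 i; have /andP [c1 c2] := H1 i.
  have e : hh (l + k)%N * ((tnth z' i)%:~R + 1) <= hh l * (tnth z i)%:~R.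
    have -> : (tnth z' i)%:~R + 1 = (tnth z' i + 1)%:~R :> R by rewrite intrD.
    by rewrite (hh_int l k) hh_le.
  rewrite /v /lo; apply/andP; split; lra.
- pose v := up i.
  exists [tuple if j == i then v else lo j | j < d].
  exists [tuple if j == i then v else up j | j < d].
  split; [move=> j; rewrite !tnth_mktuple; case: eqP => //|split].
    by exists i; rewrite !tnth_mktuple eqxx.
  move=> x [/cellE H1 /cellE H2] j; rewrite !tnth_mktuple.
  have /andP [a1 a2] := H1 j.
  case: eqP => [->|_]; last by rewrite /lo /up; apply/andP; split; lra.
  have /andP [b1 b2] := H2 i; have /andP [c1 c2] := H1 i.
  have e : hh l * ((tnth z i)%:~R + 1) <= hh (l + k)%N * (tnth z' i)%:~R.
    have -> : (tnth z i)%:~R + 1 = (tnth z i + 1)%:~R :> R by rewrite intrD.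
    by rewrite (hh_int l k) hh_le.
  rewrite /v /up; apply/andP; split; lra.
Qed.

End Grid.

Section Cover.
Variables (R : realType) (d n m : nat).
Local Notation Rd := (Rd R d).
Variables (P : 'I_n -> Rd) (S : 'I_m -> 'I_d.+1 -> Rd) (o : Rd) (D delta rad : R).
Hypotheses (D0 : 0 < D) (delta0 : 0 < delta) (delta1 : delta <= 1) (rad0 : 0 < rad).

Lemma in_floor_cell (x : Rd) l :
  grid_cell o D (l, [tuple Num.floor ((tnth x i - tnth o i) / hh D l) | i < d]) x.
Proof.
apply/cellE => i; rewrite tnth_mktuple.
have h0 := hh_gt0 D0 l.
set y := tnth x i - tnth o i.
have f1 := floor_le (y / hh D l).
have f2 := floorD1_gt (y / hh D l).
rewrite intrD in f2.
apply/andP; split.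
  by rewrite mulrC -ler_pdivlMr.
by rewrite mulrC -ler_pdivrMr // ltW.
Qed.

Lemma cell_diam l z (x y : Rd) : grid_cell o D (l, z) x -> grid_cell o D (l, z) y ->
  edist x y <= d%:R * hh D l.
Proof.
move=> /cellE Hx /cellE Hy; apply: edist_box; first exact: ltW (hh_gt0 D0 l).
move=> i; have /andP [a1 a2] := Hx i; have /andP [b1 b2] := Hy i.
rewrite ler_norml; apply/andP; split; lra.
Qed.

Lemma dr_le : delta * rad <= rad.
Proof. by rewrite ler_piMl // ltW. Qed.

Lemma small_level : exists l, d%:R * hh D l <= delta * rad / 4.
Proof.
set K := d%:R * D * 4 / (delta * rad).
have K0 : 0 <= K by rewrite /K divr_ge0 ?mulr_ge0 // ?ler0n // ltW.
have hK := archi_boundP K0.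
set N := Num.Def.archi_bound K in hK.
exists N.
have e : (N%:R : R) <= 2 ^+ N.
  by rewrite -natrX ler_nat ltnW // ltn_expl.
have dr : 0 < delta * rad by rewrite mulr_gt0.
have T0 : (0 : R) < 2 ^+ N by rewrite exprn_gt0.
rewrite /hh mulrA ler_pdivrMr //.
have : d%:R * D * 4 < N%:R * (delta * rad) by rewrite -ltr_pdivrMr.
nra.
Qed.

Lemma level_stop (x : Rd) : exists l z,
  grid_cell o D (l, z) x /\ stop_crit P delta rad (grid_cell o D (l, z)).
Proof.
have [l hl] := small_level.
exists l; eexists; split; first exact: in_floor_cell.
set C := grid_cell o D _.
have hC : C x by exact: in_floor_cell.
have dm : forall y z, C y -> C z -> edist y z <= delta * rad / 4.
  by move=> y z Cy Cz; apply: le_trans hl; exact: cell_diam Cy Cz.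
have [[k hk]|nk] := pselect (exists k, edist x (P k) <= rad / 2).
  right; exists k => y Cy.
  have t1 := edist_triangle y x (P k); have t2 := dm y x Cy hC.
  have t3 := dr_le.
  move: t1 t2 t3 hk rad0. generalize (edist y (P k)) (edist y x) (edist x (P k)). move=> *. lra.
left => i y z Cy Cz.
have hx : rad / 2 < edist x (P i).
  by rewrite ltNge; apply/negP => hh; apply: nk; exists i.
have t1 := edist_triangle (P i) z y.
have t2 := edist_triangle x z (P i).
have e1 := dm z y Cz Cy; have e2 := dm x z hC Cz.
rewrite (edistC z (P i)) in t2.
have t3 := dr_le.
move: t1 t2 t3 e1 e2 hx rad0 delta0 delta1.
generalize (edist (P i) y) (edist (P i) z) (edist z y) (edist x z) (edist x (P i)).
move=> ey ez ezy exz ex t1 t2 t3 e1 e2 hx r0 d0 d1.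
have t4 : delta * (ez - rad / 4) >= 0.
  by apply: mulr_ge0; [exact: ltW | rewrite subr_ge0; lra].
nra.
Qed.


Lemma coverage (x : Rd) j : simplex_hull (S j) x ->
  exists c, in_Q P S o D delta rad c /\ grid_cell o D c x.
Proof.
move=> Sx.
pose p l := `[< exists z, grid_cell o D (l, z) x /\ stop_crit P delta rad (grid_cell o D (l, z)) >].
have ex : exists l, p l.
  by have [l [z h]] := level_stop x; exists l; apply/asboolP; exists z.
case: (ex_minnP ex) => l /asboolP [z [xz sz]] lmin.
exists (l, z); split => //.
split; [|split] => //.
- exists [tuple (tnth z i %/ 2 ^+ l)%Z | i < d]; split.
    have := @cell_nest R d o D D0 0 l [tuple (tnth z i %/ 2 ^+ l)%Z | i < d] z.
    apply => i; rewrite tnth_mktuple.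
    have t0 : (0 : int) < 2 ^+ l by rewrite exprn_gt0.
    have hq := divz_eq (tnth z i) (2 ^+ l).
    have r0 := modz_ge0 (tnth z i) (lt0r_neq0 t0).
    have r1 := ltz_pmod (tnth z i) t0.
    move: hq r0 r1; set q := (tnth z i %/ 2 ^+ l)%Z; set r := (tnth z i %% 2 ^+ l)%Z.
    set t := 2 ^+ l; rewrite mulrDl mul1r; set A := q * t; lia.
  exists j; exists x; split => //.
  have := @cell_nest R d o D D0 0 l [tuple (tnth z i %/ 2 ^+ l)%Z | i < d] z.
  apply => //.
  move=> i; rewrite tnth_mktuple.
  have t0 : (0 : int) < 2 ^+ l by rewrite exprn_gt0.
  have hq := divz_eq (tnth z i) (2 ^+ l).
  have r0 := modz_ge0 (tnth z i) (lt0r_neq0 t0).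
  have r1 := ltz_pmod (tnth z i) t0.
  move: hq r0 r1; set q := (tnth z i %/ 2 ^+ l)%Z; set r := (tnth z i %% 2 ^+ l)%Z.
  set t := 2 ^+ l; rewrite mulrDl mul1r; set A := q * t; lia.
- move=> l' z' /= ll' sub st.
  have : p l' by apply/asboolP; exists z'; split => //; exact: sub.
  move/lmin; rewrite leqNgt; by rewrite ll'.
Qed.


Lemma overlap_lk l k (z z' : d.-tuple int) :
  in_Q P S o D delta rad (l, z) -> in_Q P S o D delta rad ((l + k)%N, z') ->
  (l, z) <> ((l + k)%N, z') ->
  exists a b : Rd, (forall j, tnth a j <= tnth b j) /\ (exists i, tnth a i = tnth b i) /\
    grid_cell o D (l, z) `&` grid_cell o D ((l + k)%N, z') `<=` closed_box a b.
Proof.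
move=> [_ [st _]] [_ [_ anc]] neq.
have [ex|nex] := pselect (exists i, tnth z' i + 1 <= tnth z i * 2 ^+ k \/
                                   (tnth z i + 1) * 2 ^+ k <= tnth z' i).
  exact: cell_overlap.
have t0 : (0 : int) < 2 ^+ k by rewrite exprn_gt0.
have H : forall i, tnth z i * 2 ^+ k <= tnth z' i /\ tnth z' i + 1 <= (tnth z i + 1) * 2 ^+ k.
  move=> i; case: (coord_dich D0 (tnth z i) (tnth z' i) t0) => // h.
  by exfalso; apply: nex; exists i.
have sub := cell_nest D0 H.
case: k H sub anc neq t0 {nex} => [|k] H sub anc neq _.
  exfalso; apply: neq; rewrite addn0; congr pair.
  apply: eq_from_tnth => i; have [h1 h2] := H i.
  move: h1 h2; rewrite expr0 !mulr1; lia.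
exfalso; apply: (anc l z) => //=.
by rewrite -[X in (X < _)%N]addn0 ltn_add2l.
Qed.

Lemma Q_overlap (c c' : cellidx d) :
  in_Q P S o D delta rad c -> in_Q P S o D delta rad c' -> c <> c' ->
  exists a b : Rd, (forall j, tnth a j <= tnth b j) /\ (exists i, tnth a i = tnth b i) /\
    grid_cell o D c `&` grid_cell o D c' `<=` closed_box a b.
Proof.
case: c => l z; case: c' => l' z' Q1 Q2 neq.
case: (leqP l l') => hl.
  move: Q2 neq; rewrite -(subnKC hl) => Q2 neq.
  exact: overlap_lk.
have hl' := ltnW hl.
move: Q1 neq; rewrite -(subnKC hl') => Q1 neq.
have [a [b [h1 [h2 h3]]]] := overlap_lk Q2 Q1 (fun e => neq (esym e)).
by exists a, b; split => //; split => //; rewrite setIC.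
Qed.

End Cover.

Section Gen.
Local Open Scope ereal_scope.
Variables (R : realType) (dd : measure_display) (T : measurableType dd).
Variable mu : {measure set T -> \bar R}.

Lemma measure_bigU_le (I : Type) (s : seq I) (A : I -> set T) :
  (forall k, measurable (A k)) ->
  mu (\big[setU/set0]_(k <- s) A k) <= \sum_(k <- s) mu (A k).
Proof.
move=> mA; elim: s => [|a s IH]; first by rewrite !big_nil measure0.
rewrite !big_cons; apply: le_trans (measureU2 _ _ _) _ => //.
  exact: bigsetU_measurable.
by rewrite leeD2l.
Qed.

Lemma measure_bigU_eq (I : eqType) (s : seq I) (A : I -> set T) :
  (forall k, measurable (A k)) -> uniq s -> trivIset [set` s] A ->
  mu (\big[setU/set0]_(k <- s) A k) = \sum_(k <- s) mu (A k).
Proof.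
move=> mA us tA.
have mU := @bigsetU_measurable _ _ _ s xpredT A (fun k _ => mA k).
have h := @ge0_integral_bigsetU _ _ _ mu _ A (cst 1) s mA us tA.
rewrite /= in h.
have h' := h (measurable_cst _) (fun _ _ => lee01).
rewrite integral_cst // mul1e in h'; rewrite h'.
by apply: eq_bigr => k _; rewrite integral_cst // mul1e.
Qed.

Lemma int_le_cst (A : set T) (f : T -> R) (c : R) : measurable A ->
  measurable_fun A f -> (forall x, A x -> (0 <= f x)%R /\ (f x <= c)%R) ->
  \int[mu]_(x in A) (f x)%:E <= c%:E * mu A.
Proof.
move=> mA mf H.
rewrite -integral_cst //.
apply: ge0_le_integral => //;
  do ?[ exact: measurable_cst | exact/measurable_EFinP |
        by move=> x Ax; rewrite lee_fin; case: (H x Ax) ].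
Qed.

Lemma int_ge_cst (A : set T) (f : T -> R) (c : R) : measurable A ->
  measurable_fun A f -> (0 <= c)%R -> (forall x, A x -> (c <= f x)%R) ->
  c%:E * mu A <= \int[mu]_(x in A) (f x)%:E.
Proof.
move=> mA mf c0 H.
rewrite -integral_cst //.
apply: ge0_le_integral => //;
  do ?[ exact: measurable_cst | exact/measurable_EFinP |
        by move=> x Ax; rewrite lee_fin; exact: H ].
Qed.

Lemma int_decomp (I : eqType) (s : seq I) (B : I -> set T) (f : T -> R) :
  (forall k, measurable (B k)) -> uniq s -> trivIset [set` s] B ->
  measurable_fun setT f -> (forall x, (0 <= f x)%R) ->
  \int[mu]_x (f x)%:E = \sum_(k <- s) \int[mu]_(x in B k) (f x)%:E +
     \int[mu]_(x in ~` \big[setU/set0]_(k <- s) B k) (f x)%:E.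
Proof.
move=> mB us tB mf f0.
set U := \big[setU/set0]_(k <- s) B k.
have mU : measurable U := @bigsetU_measurable _ _ _ s xpredT B (fun k _ => mB k).
have mfE : measurable_fun setT (fun x => (f x)%:E) by exact/measurable_EFinP.
rewrite -(setUv U) ge0_integral_setU //;
  do ?[ by move=> x _; rewrite lee_fin | exact: measurableC | by rewrite setUv |
        by apply/disj_setPCl ].
congr (_ + _).
apply: ge0_integral_bigsetU => //.
- exact: measurable_funS mfE.
- by move=> x _; rewrite lee_fin.
Qed.

End Gen.

Lemma bigU_seqP (T : Type) (I : eqType) (s : seq I) (F : I -> set T) x :
  (\big[setU/set0]_(i <- s) F i) x <-> exists2 i, i \in s & F i x.
Proof.
elim: s => [|a s IH]; first by rewrite big_nil; split => // -[].
rewrite big_cons; split.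
  case => [h|/IH [i hi h]]; first by exists a => //; rewrite mem_head.
  by exists i => //; rewrite in_cons hi orbT.
move=> [i]; rewrite in_cons => /orP [/eqP ->|hi] h; first by left.
by right; apply/IH; exists i.
Qed.

Section Main.
Variables (R : realType) (d n m : nat).
Local Notation Rd := (Rd R d).
Variables (lam : {measure set Rd -> \bar R}) (P : 'I_n -> Rd) (w : 'I_n -> R)
  (S : 'I_m -> 'I_d.+1 -> Rd) (Delta delta : R) (o : Rd)
  (Q : seq (cellidx d)) (t : cellidx d -> Rd) (nu : 'I_n -> cellidx d -> R)
  (tau sigma : 'I_n -> {measure set Rd -> \bar R}) (rad : R).
Hypotheses (hL : is_lebesgue lam) (fd : forall j, full_dim_simplex (S j))
  (D0 : 0 < Delta) (delta0 : 0 < delta) (delta1 : delta <= 1) (rad0 : 0 < rad)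
  (uQ : uniq Q) (HQ : forall c, c \in Q <-> in_Q P S o Delta delta rad c).

Local Notation cell := (grid_cell o Delta).
Local Notation hull j := (simplex_hull (S j)).

Definition U := \big[setU/set0]_(q <- Q) cell q.
Definition B q := cell q `\` \big[setU/set0]_(q' <- take (index q Q) Q) cell q'.

Lemma mcell q : measurable (cell q). Proof. exact: measurable_grid_cell. Qed.
Lemma mhull j : measurable (hull j). Proof. exact: measurable_simplex. Qed.
Lemma mU : measurable U.
Proof. by apply: bigsetU_measurable => q _; exact: mcell. Qed.
Lemma mB q : measurable (B q).
Proof.
apply: measurableD; first exact: mcell.
by apply: bigsetU_measurable => q' _; exact: mcell.
Qed.

Lemma B_sub q : B q `<=` cell q. Proof. by move=> x []. Qed.

Lemma cell_null q q' : q \in Q -> q' \in Q -> q <> q' -> lam (cell q `&` cell q') = 0%E.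
Proof.
move=> /HQ Qq /HQ Qq' neq.
have [a [b [ab [[i ei] sub]]]] := Q_overlap D0 delta0 delta1 rad0 Qq Qq' neq.
apply/eqP; rewrite eq_le measure_ge0 andbT.
apply: le_trans (le_measure _ _ _ sub) _.
- by rewrite inE; apply: measurableI; exact: mcell.
- by rewrite inE; exact: measurable_closed_box.
change (lam (closed_box a b) <= 0)%E; rewrite (hL ab) (bigD1 i) //= ei subrr mul0r.
by [].
Qed.

Lemma null_sub A q q' : measurable A -> q \in Q -> q' \in Q -> q <> q' ->
  A `<=` cell q `&` cell q' -> lam A = 0%E.
Proof.
move=> mA Qq Qq' neq sub.
apply/eqP; rewrite eq_le measure_ge0 andbT -(cell_null Qq Qq' neq).
by apply: le_measure => //; rewrite inE //; apply: measurableI; exact: mcell.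
Qed.

Lemma B_triv : trivIset [set` Q] B.
Proof.
move=> q q' /= Qq Qq' [x [Bx Bx']].
apply/eqP; apply/negP => /negP neq.
case: (ltngtP (index q Q) (index q' Q)) => hi.
- case: Bx' => _; apply; apply/bigU_seqP; exists q; last exact: B_sub.
  by rewrite in_take.
- case: Bx => _; apply; apply/bigU_seqP; exists q'; last exact: B_sub.
  by rewrite in_take.
- by move/eqP: neq; apply; rewrite -(nth_index q Qq) hi nth_index.
Qed.

Lemma BU : \big[setU/set0]_(q <- Q) B q = U.
Proof.
apply/seteqP; split => x.
  by move/bigU_seqP => [q Qq Bx]; apply/bigU_seqP; exists q => //; exact: B_sub.
move/bigU_seqP => [q0 Qq0 cx].
pose p := fun q => `[< cell q x >].
have hp : has p Q by apply/hasP; exists q0 => //; exact/asboolP.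
set k := find p Q.
have ks : (k < size Q)%N by rewrite -has_find.
set q := nth q0 Q k.
have Qq : q \in Q by exact: mem_nth.
have cq : cell q x by exact/asboolP/(nth_find q0 hp).
apply/bigU_seqP; exists q => //; split => //.
move/bigU_seqP => [q' Tq' cq'].
have Qq' : q' \in Q := mem_take Tq'.
move: Tq'; rewrite in_take // index_uniq // => hlt.
have := before_find q0 hlt.
rewrite nth_index // /p => /negbT/negP; apply; exact/asboolP.
Qed.

Lemma cover j : hull j `<=` U.
Proof.
move=> x hx.
have [c [Qc cx]] := coverage P o D0 delta0 delta1 rad0 hx.
by apply/bigU_seqP; exists c => //; apply/HQ.
Qed.

Lemma lamB A q : q \in Q -> measurable A -> lam (A `&` cell q) = lam (A `&` B q).
Proof.
move=> Qq mA.
set V := \big[setU/set0]_(q' <- take (index q Q) Q) cell q'.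
have mV : measurable V by apply: bigsetU_measurable => q' _; exact: mcell.
have -> : A `&` cell q = (A `&` B q) `|` (A `&` cell q `&` V).
  apply/seteqP; split => x.
    move=> [Ax cx]; case: (pselect (V x)) => Vx; first by right.
    by left; split => //; split.
  by case => [[Ax [cx _]]|[[Ax cx] _]].
apply: measureU0.
- by apply: measurableI => //; exact: mB.
- by apply: measurableI => //; apply: measurableI => //; exact: mcell.
apply/eqP; rewrite eq_le measure_ge0 andbT.
have sub : A `&` cell q `&` V `<=` \big[setU/set0]_(q' <- take (index q Q) Q) (cell q `&` cell q').
  move=> x [[Ax cx] /bigU_seqP [q' Tq' cx']].
  by apply/bigU_seqP; exists q'.
apply: le_trans (le_measure _ _ _ sub) _.
- by rewrite inE; apply: measurableI => //; apply: measurableI => //; exact: mcell.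
- by rewrite inE; apply: bigsetU_measurable => q' _; apply: measurableI; exact: mcell.
apply: le_trans (measure_bigU_le _ _ _) _.
  by move=> q'; apply: measurableI; exact: mcell.
rewrite big_seq_cond big1 // => q' /andP [Tq' _].
apply: cell_null => //; first exact: mem_take Tq'.
move=> e; move: Tq'; rewrite -e in_take //.
by rewrite ltnn.
Qed.


Lemma le_sum_term (f : 'I_n -> \bar R) i : (forall k, (0 <= f k)%E) -> (f i <= \sum_k f k)%E.
Proof. move=> f0; rewrite (bigD1 i) //= leeDl // sume_ge0 // => k _; exact: f0. Qed.

Lemma cell_box (q : cellidx d) : cell q =
  closed_box [tuple tnth o i + Delta / 2 ^+ q.1 * (tnth q.2 i)%:~R | i < d]
             [tuple tnth o i + Delta / 2 ^+ q.1 * ((tnth q.2 i)%:~R + 1) | i < d].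
Proof.
apply/seteqP; split => x; rewrite /closed_box /grid_cell /= => H i; have := H i;
  by rewrite !tnth_mktuple.
Qed.

Lemma lam_cell_fin q : lam (cell q) \is a fin_num.
Proof.
rewrite cell_box hL // => i; rewrite !tnth_mktuple lerD2l ler_pM2l ?lerDl //.
exact: (hh_gt0 D0).
Qed.

Lemma lam_fin A q : measurable A -> lam (A `&` cell q) \is a fin_num.
Proof.
move=> mA; rewrite ge0_fin_numE ?measure_ge0 //.
apply: (@le_lt_trans _ _ (lam (cell q))).
  apply: le_measure; rewrite ?inE.
  - by apply: measurableI => //; exact: mcell.
  - exact: mcell.
  - by move=> x [].
by rewrite -ge0_fin_numE ?measure_ge0 // lam_cell_fin.
Qed.

Definition W q := fine (\sum_(j < m) lam (hull j `&` cell q))%E.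

Lemma WE q : (W q)%:E = (\sum_(j < m) lam (hull j `&` cell q))%E.
Proof.
rewrite /W fineK //; apply/sum_fin_numP => j _ _; apply: lam_fin; exact: mhull.
Qed.

Lemma WB q : q \in Q -> (W q)%:E = (\sum_(j < m) lam (hull j `&` B q))%E.
Proof.
by move=> Qq; rewrite WE; apply: eq_bigr => j _; rewrite lamB //; exact: mhull.
Qed.

Lemma W_ge0 q : 0 <= W q.
Proof. by rewrite /W fine_ge0 // sume_ge0 // => j _; exact: measure_ge0. Qed.

Hypothesis Hnu : discrete_plan w Q W nu.
Hypothesis Htau : forall i A, measurable A ->
  tau i A = (\sum_(q <- Q) ((nu i q / W q)%:E *
                  \sum_(j < m) lam (A `&` simplex_hull (S j) `&` grid_cell o Delta q)))%E.
Hypothesis Hsig : transport_plan lam P w S sigma.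

Lemma tauB i q : q \in Q -> tau i (B q) = (nu i q)%:E.
Proof.
move=> Qq; rewrite Htau; last exact: mB.
rewrite (bigD1_seq q) //= [X in (_ + X)%E]big_seq_cond [X in (_ + X)%E]big1 ?adde0; last first.
  move=> q' /andP [Qq' ne]; rewrite big1 ?mule0 // => j _.
  apply: (@null_sub _ q q') => //.
  - by apply: measurableI; [apply: measurableI; [exact: mB|exact: mhull]|exact: mcell].
  - by move=> e; move: ne; rewrite e eqxx.
  - by move=> x [[Bx _] cx]; split => //; exact: B_sub.
have -> : (\sum_(j < m) lam (B q `&` hull j `&` cell q))%E = (W q)%:E.
  rewrite WB //; apply: eq_bigr => j _; congr (lam _).
  apply/seteqP; split => x; first by move=> [[Bx hx] _].
  by move=> [hx Bx]; split => //; exact: B_sub.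
rewrite -EFinM; congr (_%:E).
have [W0|W0] := eqVneq (W q) 0; last by rewrite divfK.
rewrite W0 mulr0; apply/esym.
case: Hnu => n0 [_ n2]; have := n2 q Qq.
rewrite W0 => /eqP; rewrite psumr_eq0; last by move=> k _; exact: n0.
by move/allP => /(_ i (mem_index_enum i)) /eqP.
Qed.

Lemma tauRest i : tau i (~` U) = 0%E.
Proof.
rewrite Htau; last exact: measurableC mU.
rewrite big_seq_cond big1 // => q /andP [Qq _].
rewrite big1 ?mule0 // => j _.
have -> : ~` U `&` hull j `&` cell q = set0.
  apply/seteqP; split => x // [[nU _] cx]; apply: nU.
  by apply/bigU_seqP; exists q.
exact: measure0.
Qed.

Lemma sig_sum A : measurable A ->
  (\sum_i sigma i A = \sum_(j < m) lam (A `&` hull j))%E.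
Proof. by case: Hsig => _ h; exact: h. Qed.

Lemma sigRest i : sigma i (~` U) = 0%E.
Proof.
apply/eqP; rewrite eq_le measure_ge0 andbT.
change (sigma i (~` U) <= 0)%E.
apply: le_trans (@le_sum_term (fun k => sigma k (~` U)) i _) _.
  by move=> k; exact: measure_ge0.
rewrite sig_sum; last exact: measurableC mU.
rewrite big1 // => j _.
have -> : ~` U `&` hull j = set0.
  by apply/seteqP; split => x // [nU hx]; apply: nU; exact: (cover hx).
exact: measure0.
Qed.

Lemma sigT i : sigma i setT = (w i)%:E.
Proof. by case: Hsig => h _; exact: h. Qed.

Lemma sig_fin i A : measurable A -> sigma i A \is a fin_num.
Proof.
move=> mA; rewrite ge0_fin_numE ?measure_ge0 //.
apply: (@le_lt_trans _ _ (sigma i setT)); first by apply: le_measure; rewrite ?inE.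
by rewrite sigT ltry.
Qed.

Lemma sumsigB i : (\sum_(q <- Q) sigma i (B q) = (w i)%:E)%E.
Proof.
rewrite -measure_bigU_eq //; last 2 first.
- exact: mB.
- exact: B_triv.
rewrite BU -sigT -(setUv U) measureU //; last 3 first.
- exact: mU.
- exact: measurableC mU.
- by rewrite setICr.
have e := sigRest i; change (sigma i U = sigma i U + sigma i (~` U))%E; by rewrite e adde0.
Qed.

Lemma sumi_sigB q : q \in Q -> (\sum_i sigma i (B q) = (W q)%:E)%E.
Proof.
move=> Qq; rewrite sig_sum; last exact: mB.
by rewrite WB //; apply: eq_bigr => j _; rewrite setIC.
Qed.

Definition nu' i q := fine (sigma i (B q)).

Lemma nu'E i q : (nu' i q)%:E = sigma i (B q).
Proof. by rewrite /nu' fineK // sig_fin //; exact: mB. Qed.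

Lemma nu'_plan : discrete_plan w Q W nu'.
Proof.
split; [|split].
- by move=> i q; rewrite /nu' fine_ge0 // measure_ge0.
- move=> i; apply: EFin_inj; rewrite -sumEFin -sumsigB.
  by apply: eq_bigr => q _; rewrite nu'E.
- move=> q Qq; apply: EFin_inj; rewrite -sumEFin -sumi_sigB //.
  by apply: eq_bigr => i _; rewrite nu'E.
Qed.


Hypothesis Ht : forall q, q \in Q -> cell q (t q).

Definition farb q := `[< forall i x y, cell q x -> cell q y ->
   edist (P i) x <= (1 + delta) * edist (P i) y >].
Definition eps q : R := if farb q then 0 else 2 * rad.
Definition dt i q := edist (P i) (t q).

Lemma eps_ge0 q : 0 <= eps q.
Proof. by rewrite /eps; case: ifP => // _; rewrite mulr_ge0 // ltW. Qed.

Lemma near_box q : q \in Q -> ~~ farb q ->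
  exists k, forall y, cell q y -> edist y (P k) <= rad.
Proof.
move=> /HQ [_ [st _]] nf; case: st => // h.
by exfalso; move/negP: nf; apply; apply/asboolP.
Qed.

Lemma pw_up i q x : q \in Q -> cell q x ->
  edist x (P i) <= (1 + delta) * dt i q + eps q.
Proof.
move=> Qq cx; rewrite /eps /dt; case: ifP => hf.
  move/asboolP: hf => hf; rewrite addr0 edistC; apply: hf => //; exact: Ht.
have [k hk] := near_box Qq (negbT hf).
have t1 := edist_triangle x (P k) (t q).
have t2 := edist_triangle x (t q) (P i).
have e1 := hk x cx; have e2 := hk (t q) (Ht Qq).
rewrite (edistC (P k) (t q)) in t1; rewrite (edistC (t q) (P i)) in t2.
have d0 := edist_ge0 (P i) (t q).
move: t1 t2 e1 e2 d0 delta0.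
generalize (edist x (P k)) (edist x (t q)) (edist (t q) (P k)) (edist x (P i)) (edist (P i) (t q)).
move=> a b c e g *; nra.
Qed.

Lemma pw_lo i q x : q \in Q -> cell q x ->
  dt i q - eps q <= (1 + delta) * edist x (P i).
Proof.
move=> Qq cx; rewrite /eps /dt; case: ifP => hf.
  move/asboolP: hf => hf; rewrite subr0 (edistC x); apply: hf => //; exact: Ht.
have [k hk] := near_box Qq (negbT hf).
have t1 := edist_triangle x (P k) (t q).
have t2 := edist_triangle (P i) x (t q).
have e1 := hk x cx; have e2 := hk (t q) (Ht Qq).
rewrite (edistC (P k) (t q)) in t1; rewrite (edistC (P i) x) in t2.
have d0 := edist_ge0 x (P i).
move: t1 t2 e1 e2 d0 delta0.
generalize (edist x (P k)) (edist x (t q)) (edist (t q) (P k)) (edist x (P i)) (edist (P i) (t q)).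
move=> a b c e g *; nra.
Qed.

Lemma mfi i : measurable_fun [set: Rd] (fun x => edist x (P i)).
Proof. exact: measurable_edist. Qed.

Lemma int_split (mu : {measure set Rd -> \bar R}) i :
  (\int[mu]_x (edist x (P i))%:E =
   \sum_(q <- Q) \int[mu]_(x in B q) (edist x (P i))%:E +
   \int[mu]_(x in ~` U) (edist x (P i))%:E)%E.
Proof.
rewrite -BU; apply: int_decomp => //.
- exact: mB.
- exact: B_triv.
- exact: mfi.
- by move=> x; exact: edist_ge0.
Qed.

Lemma tau_cost_le :
  (plan_cost P tau <= ((1 + delta) * discrete_cost P Q t nu +
     \sum_(q <- Q) eps q * W q)%:E)%E.
Proof.
rewrite /plan_cost.
have -> : (1 + delta) * discrete_cost P Q t nu + \sum_(q <- Q) eps q * W q =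
   \sum_(i < n) \sum_(q <- Q) ((1 + delta) * dt i q + eps q) * nu i q.
  rewrite /discrete_cost mulr_sumr.
  have -> : \sum_(q <- Q) eps q * W q = \sum_(q <- Q) \sum_(i < n) eps q * nu i q.
    rewrite big_seq_cond [RHS]big_seq_cond; apply: eq_bigr => q /andP [Qq _].
    by rewrite -mulr_sumr; case: Hnu => _ [_ h]; rewrite h.
  rewrite (exchange_big _ _ _ _ _ (fun q i => eps q * nu i q)) -big_split /=.
  apply: eq_bigr => i _; rewrite mulr_sumr -big_split /=; apply: eq_bigr => q _.
  rewrite /dt; ring.
rewrite -sumEFin; apply: lee_sum => i _.
rewrite int_split.
have -> : (\int[tau i]_(x in ~` U) (edist x (P i))%:E = 0)%E.
  apply: null_set_integral; first exact: measurableC mU.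
    apply: measurable_funS (measurable_edistE (P i)) => //; exact: measurableC mU.
  exact: tauRest.
rewrite adde0 -sumEFin big_seq_cond [X in (_ <= X)%E]big_seq_cond.
apply: lee_sum => q /andP [Qq _].
rewrite EFinM -(tauB i Qq).
apply: int_le_cst; first exact: mB.
  apply: measurable_funS (mfi i) => //; exact: mB.
move=> x Bx; split; first exact: edist_ge0.
exact: pw_up (B_sub Bx).
Qed.


Lemma nu'_ge0 i q : 0 <= nu' i q.
Proof. by rewrite /nu' fine_ge0 // measure_ge0. Qed.

Lemma per_cell i q : q \in Q ->
  ((nu' i q * dt i q)%:E <= (1 + delta)%:E * \int[sigma i]_(x in B q) (edist x (P i))%:E
                              + (eps q * nu' i q)%:E)%E.
Proof.
move=> Qq.
have d1 : 0 < 1 + delta by rewrite addr_gt0.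
set lo := Num.max 0 (dt i q - eps q) / (1 + delta).
have lo0 : 0 <= lo by rewrite /lo divr_ge0 ?le_max ?lexx // ltW.
have hlo : (lo%:E * sigma i (B q) <= \int[sigma i]_(x in B q) (edist x (P i))%:E)%E.
  apply: int_ge_cst => //; first exact: mB.
    apply: measurable_funS (mfi i) => //; exact: mB.
  move=> x Bx; rewrite /lo ler_pdivrMr // mulrC ge_max; apply/andP; split.
    by rewrite mulr_ge0 ?edist_ge0 // ltW.
  exact: pw_lo (B_sub Bx).
have key : nu' i q * dt i q <= (1 + delta) * (lo * nu' i q) + eps q * nu' i q.
  have e : (1 + delta) * lo = Num.max 0 (dt i q - eps q).
    by rewrite /lo mulrC divfK // gt_eqF.
  rewrite mulrA e -mulrDl [X in _ <= X]mulrC ler_wpM2l ?nu'_ge0 //.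
  have : dt i q - eps q <= Num.max 0 (dt i q - eps q) by rewrite le_max lexx orbT.
  lra.
apply: le_trans (_ : ((1 + delta) * (lo * nu' i q) + eps q * nu' i q)%:E <= _)%E.
  by rewrite lee_fin.
rewrite EFinD leeD2r // EFinM; apply: lee_wpmul2l; first by rewrite lee_fin ltW.
by rewrite EFinM nu'E.
Qed.

Lemma nu'_cost_le :
  ((discrete_cost P Q t nu')%:E <= (1 + delta)%:E * plan_cost P sigma +
     (\sum_(q <- Q) eps q * W q)%:E)%E.
Proof.
have -> : \sum_(q <- Q) eps q * W q = \sum_(i < n) \sum_(q <- Q) eps q * nu' i q.
  rewrite exchange_big /= big_seq_cond [RHS]big_seq_cond; apply: eq_bigr => q /andP [Qq _].
  by rewrite -mulr_sumr; case: nu'_plan => _ [_ h]; rewrite h.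
rewrite /discrete_cost /plan_cost -!sumEFin ge0_sume_distrr; last first.
  move=> i _; apply: integral_ge0 => x _; rewrite lee_fin; exact: edist_ge0.
rewrite -big_split /=; apply: lee_sum => i _.
rewrite -sumEFin.
apply: (@le_trans _ _ (\sum_(q <- Q) ((1 + delta)%:E *
    \int[sigma i]_(x in B q) (edist x (P i))%:E + (eps q * nu' i q)%:E))%E).
  rewrite big_seq_cond [X in (_ <= X)%E]big_seq_cond; apply: lee_sum => q /andP [Qq _].
  exact: per_cell.
rewrite big_split /= sumEFin leeD2r // -ge0_sume_distrr; last first.
  move=> q _; apply: integral_ge0 => x _; rewrite lee_fin; exact: edist_ge0.
apply: lee_wpmul2l; first by rewrite lee_fin addr_ge0 // ltW.
rewrite (int_split (sigma i) i) leeDl //.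
apply: integral_ge0 => x _; rewrite lee_fin; exact: edist_ge0.
Qed.


Definition box k : set Rd := closed_box [tuple tnth (P k) i - rad | i < d]
                                         [tuple tnth (P k) i + rad | i < d].
Definition Ubox := \big[setU/set0]_(k < n) box k.
Lemma mbox k : measurable (box k). Proof. exact: measurable_closed_box. Qed.
Lemma mUbox : measurable Ubox.
Proof. by apply: bigsetU_measurable => k _; exact: mbox. Qed.

Lemma in_box k x : edist x (P k) <= rad -> box k x.
Proof.
move=> h i; rewrite !tnth_mktuple.
have := edist_coord x (P k) i; rewrite ler_norml => /andP [a b].
move: a b h; generalize (edist x (P k)) => e a b h; apply/andP; split; lra.
Qed.

Lemma lam_box k : lam (box k) = ((2 * rad) ^+ d)%:E.
Proof.
rewrite hL; last by move=> i; rewrite !tnth_mktuple; move: (tnth (P k) i) rad0 => a r0; lra.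
congr (_%:E); rewrite (eq_bigr (fun _ => 2 * rad)); last first.
  by move=> i _; rewrite !tnth_mktuple; lra.
by rewrite prodr_const card_ord.
Qed.

Definition Mr := \sum_(i < n) fine (sigma i Ubox).

Lemma MrE : (Mr%:E = \sum_(j < m) lam (Ubox `&` hull j))%E.
Proof.
rewrite /Mr EFin_sum_fine; last by move=> i _; apply: sig_fin; exact: mUbox.
exact: sig_sum mUbox.
Qed.

Hypothesis radE : rad ^+ d * (n * m)%:R = delta ^+ d.

Lemma Mr_le : Mr <= (2 * delta) ^+ d.
Proof.
rewrite -lee_fin MrE.
apply: (@le_trans _ _ (\sum_(j < m) lam Ubox)).
  apply: lee_sum => j _; apply: le_measure; rewrite ?inE.
  - by apply: measurableI; [exact: mUbox|exact: mhull].
  - exact: mUbox.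
  - by move=> x [].
have hU : (lam Ubox <= (n%:R * (2 * rad) ^+ d)%:E)%E.
  apply: le_trans (measure_bigU_le _ _ _) _; first exact: mbox.
  rewrite (eq_bigr (fun k => ((2 * rad) ^+ d)%:E)); last by move=> k _; exact: lam_box.
  have e : forall y : R, y *+ n = n%:R * y by move=> y; rewrite mulr_natl.
  by rewrite sumEFin sumr_const card_ord lee_fin e.
apply: (@le_trans _ _ (\sum_(j < m) (n%:R * (2 * rad) ^+ d)%:E)%E).
  by apply: lee_sum => j _; exact: hU.
rewrite sumEFin sumr_const card_ord lee_fin -mulr_natl exprMn [X in _ <= X]exprMn -radE.
rewrite natrM -mulr_natr le_eqVlt; apply/orP; left; apply/eqP; ring.
Qed.

Lemma near_le : \sum_(q <- Q | ~~ farb q) W q <= Mr.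
Proof.
rewrite -lee_fin -sumEFin /Mr EFin_sum_fine; last by move=> i _; apply: sig_fin; exact: mUbox.
rewrite big_seq_cond (eq_bigr (fun q => \sum_i sigma i (B q))); last first.
  by move=> q /andP [Qq _]; rewrite sumi_sigB.
rewrite -big_seq_cond exchange_big /=; apply: lee_sum => i _.
rewrite big_seq_cond -big_filter.
set Qn := [seq q <- Q | (q \in Q) && ~~ farb q].
have sQn : {subset Qn <= Q} by move=> q; rewrite mem_filter => /andP [/andP [] ].
rewrite -measure_bigU_eq; last 3 first.
- exact: mB.
- exact: filter_uniq.
- apply: sub_trivIset B_triv => q /=; exact: sQn.
apply: le_measure; rewrite ?inE; first by apply: bigsetU_measurable => q _; exact: mB.
  exact: mUbox.
move=> x /bigU_seqP [q]; rewrite mem_filter => /andP [/andP [Qq nf] _] Bx.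
have [k hk] := near_box Qq nf.
by apply/bigU_seqP; exists k; [exact: mem_index_enum | apply: in_box; apply: hk; exact: B_sub].
Qed.

Hypothesis w1 : \sum_(i < n) w i = 1.

Lemma C_ge : ((rad * (1 - Mr))%:E <= plan_cost P sigma)%E.
Proof.
have hsplit i : w i = fine (sigma i Ubox) + fine (sigma i (~` Ubox)).
  apply: EFin_inj; rewrite -sigT EFinD !fineK; last 2 first.
  - by apply: sig_fin; exact: measurableC mUbox.
  - by apply: sig_fin; exact: mUbox.
  rewrite -measureU; last 3 first.
  - exact: mUbox.
  - exact: measurableC mUbox.
  - by rewrite setICr.
  by rewrite setUv.
have -> : rad * (1 - Mr) = \sum_(i < n) rad * fine (sigma i (~` Ubox)).
  rewrite -mulr_sumr -w1 /Mr -sumrB; congr (_ * _); apply: eq_bigr => i _.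
  by rewrite hsplit; ring.
rewrite -sumEFin /plan_cost; apply: lee_sum => i _.
apply: (@le_trans _ _ (\int[sigma i]_(x in ~` Ubox) (edist x (P i))%:E)%E).
  rewrite EFinM fineK; last by apply: sig_fin; exact: measurableC mUbox.
  apply: int_ge_cst; first exact: measurableC mUbox.
  - apply: measurable_funS (mfi i) => //; exact: measurableC mUbox.
  - exact: ltW.
  move=> x nU; rewrite leNgt; apply/negP => hlt; apply: nU.
  by apply/bigU_seqP; exists i; [exact: mem_index_enum | apply: in_box; exact: ltW].
apply: ge0_subset_integral => //; first exact: measurableC mUbox.
- exact: measurable_edistE.
- by move=> x _; rewrite lee_fin; exact: edist_ge0.
Qed.


Hypothesis delta15 : delta <= 1 / 5.
Hypothesis dpos : (0 < d)%N.
Hypothesis opt : forall nu'', discrete_plan w Q W nu'' ->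
     discrete_cost P Q t nu <= discrete_cost P Q t nu''.

Lemma eps_sum : \sum_(q <- Q) eps q * W q = 2 * rad * \sum_(q <- Q | ~~ farb q) W q.
Proof.
rewrite mulr_sumr [RHS]big_mkcond /=; apply: eq_bigr => q _.
by rewrite /eps; case: (farb q) => /=; rewrite ?mul0r ?mulr0.
Qed.

Lemma main_bound : (plan_cost P tau <= (1 + 21 * delta)%:E * plan_cost P sigma)%E.
Proof.
have UB := tau_cost_le.
have O := opt nu'_plan.
have LB := nu'_cost_le.
have Cg := C_ge.
have hM := Mr_le.
have hN := near_le.
have N0 : 0 <= \sum_(q <- Q | ~~ farb q) W q by rewrite sumr_ge0 // => q _; exact: W_ge0.
have Mx : (2 * delta) ^+ d <= 2 * delta.
  rewrite -(prednK dpos) exprS ler_piMr //; first by rewrite mulr_ge0 // ltW.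
  by rewrite exprn_ile1 //; [rewrite mulr_ge0 // ltW | move: delta15 => h; lra].
rewrite eps_sum in UB LB.
have C0 : (0 <= plan_cost P sigma)%E.
  rewrite /plan_cost sume_ge0 // => i _; apply: integral_ge0 => x _.
  by rewrite lee_fin; exact: edist_ge0.
move: C0 UB LB Cg.
case: (plan_cost P sigma) => [c| |] //; last first.
  by move=> _ _ _ _; rewrite mulry gtr0_sg ?mul1e ?leey // addr_gt0 // mulr_gt0.
rewrite !lee_fin => c0 UB LB Cg.
rewrite -EFinM; apply: le_trans UB _; rewrite lee_fin.
move: O LB Cg hM hN N0 Mx c0 delta0 delta15 rad0.
generalize (discrete_cost P Q t nu) (discrete_cost P Q t nu') Mr
  (\sum_(q <- Q | ~~ farb q) W q) ((2 * delta) ^+ d).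
move=> cn cn' M N X O LB Cg hM hN N0 Mx c0 d0 d15 r0.
have r0' := ltW r0; have d0' := ltW d0.
have h1 : rad * M <= rad * (2 * delta) by rewrite ler_wpM2l //; exact: le_trans hM Mx.
have h2 : delta * rad <= rad / 5 by nra.
have h3 : rad <= 5 / 3 * c by nra.
have h4 : delta * rad <= delta * (5 / 3 * c) by rewrite ler_wpM2l.
have h5 : rad * N <= rad * M by rewrite ler_wpM2l.
have h6 : delta * (rad * N) <= delta * (rad * M) by rewrite ler_wpM2l.
have h7 : delta * (rad * M) <= delta * (rad * (2 * delta)) by rewrite ler_wpM2l.
have h8 : delta * delta * c <= delta * c / 5 by nra.
have h9 : delta * cn <= delta * cn' by rewrite ler_wpM2l.
have h10 : delta * cn' <= delta * ((1 + delta) * c + 2 * rad * N) by rewrite ler_wpM2l.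
nra.
Qed.

End Main.

Theorem theorem9 (R : realType) (d n m : nat)
  (lam : {measure set (Rd R d) -> \bar R})
  (P : 'I_n -> Rd R d) (w : 'I_n -> R)
  (S : 'I_m -> 'I_d.+1 -> Rd R d)
  (Delta delta : R) (o : Rd R d)
  (Q : seq (cellidx d)) (t : cellidx d -> Rd R d)
  (nu : 'I_n -> cellidx d -> R)
  (tau : 'I_n -> {measure set (Rd R d) -> \bar R}) :
  (0 < d)%N ->
  is_lebesgue lam ->
  (forall i, 0 < w i) -> \sum_(i < n) w i = 1 ->
  (forall j, full_dim_simplex (S j)) ->
  (\sum_(j < m) lam (simplex_hull (S j)) = 1)%E ->
  Delta = longest_edge S ->
  0 < delta -> delta <= 1 / 5 ->
  let rad := delta / ((n * m)%:R `^ (d%:R^-1)) in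
  uniq Q ->
  (forall c, c \in Q <-> in_Q P S o Delta delta rad c) ->
  (forall q, q \in Q -> grid_cell o Delta q (t q)) ->
  let W := fun q => fine (\sum_(j < m) lam (simplex_hull (S j) `&` grid_cell o Delta q))%E in
  discrete_plan w Q W nu ->
  (forall nu', discrete_plan w Q W nu' ->
     discrete_cost P Q t nu <= discrete_cost P Q t nu') ->
  (forall i A, measurable A ->
     tau i A = (\sum_(q <- Q) ((nu i q / W q)%:E *
                  \sum_(j < m) lam (A `&` simplex_hull (S j) `&` grid_cell o Delta q)))%E) ->
  forall sigma : 'I_n -> {measure set (Rd R d) -> \bar R},
    transport_plan lam P w S sigma ->
    (plan_cost P tau <= (1 + 21 * delta)%:E * plan_cost P sigma)%E.
Proof.
move=> dpos hL w0 w1 fd vol1 HD delta0 delta15 rad uQ HQ Ht W Hnu opt Htau sigma Hsig.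
have delta1 : delta <= 1 by move: delta15; lra.
have npos : (0 < n)%N.
  case: (posnP n) => // n0; move: w1; rewrite big1; last first.
    by move=> [k hk] _; exfalso; move: hk; rewrite n0.
  by move/eqP; rewrite eq_sym oner_eq0.
have mpos : (0 < m)%N.
  case: (posnP m) => // m0; move: vol1; rewrite big1; last first.
    by move=> [k hk] _; exfalso; move: hk; rewrite m0.
  by move/eqP; rewrite eq_sym (@eqe R) oner_eq0.
have nm0 : (0 : R) < (n * m)%:R by rewrite ltr0n muln_gt0 npos.
have rad0 : 0 < rad by rewrite /rad divr_gt0 // powR_gt0.
have radE : rad ^+ d * (n * m)%:R = delta ^+ d.
  have dn0 : (d%:R : R) != 0 by rewrite pnatr_eq0 -lt0n.
  have X : ((n * m)%:R `^ (d%:R^-1)) ^+ d = (n * m)%:R :> R.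
    by rewrite -powR_mulrn ?powR_ge0 // -powRrM mulVf // powRr1 // ltW.
  by rewrite /rad exprMn exprVn X divfK // gt_eqF.
have D0 : 0 < Delta.
  pose j0 := Ordinal mpos.
  have := fd j0; rewrite /full_dim_simplex.
  set M := \matrix_(k, i) _.
  have [[k [i hki]]|H] := pselect (exists k i, M k i != 0); last first.
    have M0 : M = 0.
      apply/matrixP => k i; rewrite [RHS]mxE.
      by apply/eqP/negPn/negP => h; apply: H; exists k, i.
    by rewrite M0 -(prednK dpos) det0 eqxx.
  move=> _.
  rewrite HD.
  have e1 : 0 < `|M k i| by rewrite normr_gt0.
  apply: lt_le_trans e1 _.
  rewrite /M mxE.
  apply: le_trans (edist_coord _ _ i) _.
  rewrite /longest_edge.
  apply: le_trans (le_bigmax _ _ j0).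
  apply: le_trans (le_bigmax _ _ (lift ord0 k)).
  exact: (le_bigmax _ _ ord0).
exact: (main_bound hL fd D0 delta0 delta1 rad0 uQ HQ Hnu Htau Hsig Ht radE w1 delta15 dpos opt).
Qed.
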